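(* Let $n\ge 1$, $d_1,\dots,d_n\ge 1$, $L_i\in\mathbb{C}^{d_i\times d_i}$ ($i=1,\dots,n$) and $C_{i,i-1}\in\mathbb{C}^{d_i\times d_{i-1}}$ ($i=2,\dots,n$). Assume: (i) each $L_i$ is invertible and diagonalizable, $L_iV_i=V_i\Lambda_i$ with $V_i$ invertible and $\Lambda_i=\mathrm{diag}(\lambda_{i,1},\dots,\lambda_{i,d_i})$; (ii) $\sigma(L_i)\cap\sigma(L_j)=\emptyset$ for all $i\neq j$; (iii) $\|L_1\|<\|L_2\|<\cdots<\|L_n\|\le 1$. Let $\mathsf{NonLin}$ be the nonlinear chained cascade map $\mathsf{NonLin}(x_1,\dots,x_n)=(L_1x_1+N_1(x_1),\;L_2x_2+C_{2,1}x_1+N_2(x_1,x_2),\;\dots,\;L_nx_n+C_{n,n-1}x_{n-1}+N_n(x_{n-1},x_n))$ for some maps $N_1:\mathbb{C}^{d_1}\to\mathbb{C}^{d_1}$, $N_i:\mathbb{C}^{d_{i-1}}\times\mathbb{C}^{d_i}\to\mathbb{C}^{d_i}$, and let $\tau:\mathbb{C}^{d_1}\times\cdots\times\mathbb{C}^{d_n}\to\mathbb{C}^{d_1}\times\cdots\times\mathbb{C}^{d_n}$ be a topological conjugacy (homeomorphism) with $\mathsf{Lin}=\tau^{-1}\circ\mathsf{NonLin}\circ\tau$. Then for every $y\in\mathbb{C}^{d_1}\times\cdots\times\mathbb{C}^{d_n}$, $$\lim_{t\to\infty}\Big\|\mathsf{NonLin}^{\circ t}(y)-(\tau\circ\mathsf{Nom}\circ\tau^{-1})^{\circ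 t}\big((\tau\circ\mathsf{pert}\circ\tau^{-1})(y)\big)\Big\|_\times=0.$$
   Context: Each $\mathbb{C}^{d_i}$ carries a fixed norm $\|\cdot\|$, matrices carry the induced operator norm, and $\|(x_1,\dots,x_n)\|_\times=\sum_i\|x_i\|$. $\mathsf{Lin}(x_1,\dots,x_n)=(L_1x_1,\;L_2x_2+C_{2,1}x_1,\;\dots,\;L_nx_n+C_{n,n-1}x_{n-1})$, $\mathsf{Nom}(x_1,\dots,x_n)=(L_1x_1,\dots,L_nx_n)$, and $\mathsf{F}^{\circ t}$ is the $t$-fold iterate. Matrices $D_{i,j}$ ($1\le j\le i\le n$) are defined recursively in $i$: $D_{i,i}=I_{d_i}$; for $i\ge 2$, $1\le j\le i-1$, $[\tilde C_{i,j}]_{\ell,m}=[V_i^{-1}C_{i,i-1}D_{i-1,j}V_j]_{\ell,m}(1-\lambda_{j,m}/\lambda_{i,\ell})^{-1}$ and $D_{i,j}=L_i^{-1}V_i\tilde C_{i,j}V_j^{-1}$. Define $\mathsf{pert}_1(x_1)=x_1$, $\mathsf{pert}_i(x_1,\dots,x_i)=x_i+\sum_{j=1}^{i-1}(-1)^{i-1-j}D_{i,j}\mathsf{pert}_j(x_1,\dots,x_j)$ for $i\ge2$, and $\mathsf{pert}(x)=(\mathsf{pert}_1(x_1),\dots,\mathsf{pert}_n(x_1,\dots,x_n))$. *)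

(* Defs.v *)
From HB Require Import structures.
From mathcomp Require Import all_boot all_order all_algebra.
From mathcomp Require Import complex.
From mathcomp Require Import all_classical all_reals all_analysis.

Unset Printing Implicit Defensive.

Import Order.TTheory GRing.Theory Num.Theory.
Local Open Scope ring_scope.
Local Open Scope classical_set_scope.

(* Blocks are indexed 0-based: block k (k < n) corresponds to block k+1 of the paper.
   [Cc k : 'M_(d k.+1, d k)] is the paper's C_{k+2,k+1}. *)

Section Defs.
Variable R : realType.
Local Notation C := (R[i])%type.

Definition is_norm (m : nat) (nrm : 'cV[C]_m -> R) : Prop :=
  [/\ forall x, 0 <= nrm x,
      forall x, nrm x = 0 -> x = 0,
      forall (a : C) x, real_complex R (nrm (a *: x)) = `|a| * real_complex R (nrm x)
    & forall x y, nrm (x + y) <= nrm x + nrm y].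

Definition opnorm (m p : nat) (nm : 'cV[C]_m -> R) (np : 'cV[C]_p -> R)
  (A : 'M[C]_(p, m)) : R :=
  sup [set np (A *m x) / nm x | x in [set x : 'cV[C]_m | x != 0]].

Variables (n : nat) (d : nat -> nat).

Definition state := forall i : 'I_n, 'cV[C]_(d i).

Definition normx (nrm : forall i : nat, 'cV[C]_(d i) -> R) (x : state) : R :=
  \sum_(i < n) nrm i (x i).

Definition subs (x y : state) : state := fun i => x i - y i.

Definition scontinuous (nrm : forall i : nat, 'cV[C]_(d i) -> R)
  (f : state -> state) : Prop :=
  forall x (e : R), 0 < e -> exists2 del : R, 0 < del &
    forall z, normx nrm (subs z x) < del -> normx nrm (subs (f z) (f x)) < e.

Definition ext (x : state) (i : nat) : 'cV[C]_(d i) :=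
  (match (i < n)%N as b return (i < n)%N = b -> 'cV[C]_(d i) with
   | true => fun h => x (Ordinal h)
   | false => fun _ => 0
   end) erefl.

Definition restr (f : forall i : nat, 'cV[C]_(d i)) : state := fun i => f (val i).

Variables (L : forall i : nat, 'M[C]_(d i)) (Cc : forall k : nat, 'M[C]_(d k.+1, d k)).

Definition Lin (x : state) : state :=
  restr (fun i => L i *m ext x i +
    match i as i0 return 'cV[C]_(d i0) with
    | 0 => 0
    | k.+1 => Cc k *m ext x k
    end).

Definition Nom (x : state) : state := fun i => L i *m x i.

Definition NonLin (N1 : 'cV[C]_(d 0%N) -> 'cV[C]_(d 0%N))
  (N : forall k : nat, 'cV[C]_(d k) -> 'cV[C]_(d k.+1) -> 'cV[C]_(d k.+1))
  (x : state) : state :=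
  restr (fun i => L i *m ext x i +
    match i as i0 return 'cV[C]_(d i0) with
    | 0 => N1 (ext x 0%N)
    | k.+1 => Cc k *m ext x k + N k (ext x k) (ext x k.+1)
    end).

Variables (V : forall i : nat, 'M[C]_(d i)) (lam : forall i : nat, 'I_(d i) -> C).

Definition idlike (i j : nat) : 'M[C]_(d i, d j) :=
  \matrix_(a < d i, b < d j) ((a : nat) == b)%:R.

(* D i j (j <= i): D_{i,i} = I, and for j < i the recursive definition;
   values for j > i are irrelevant (set to 0). *)
Fixpoint Dm (i j : nat) {struct i} : 'M[C]_(d i, d j) :=
  match i as i0 return 'M[C]_(d i0, d j) with
  | 0 => idlike 0%N j
  | k.+1 =>
      if j == k.+1 then idlike k.+1 j
      else if (j <= k)%N then
        let M := invmx (V k.+1) *m Cc k *m Dm k j *m V j in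
        let Ct := \matrix_(l < d k.+1, m < d j)
                    (M l m * (1 - lam j m / lam k.+1 l)^-1) in
        invmx (L k.+1) *m V k.+1 *m Ct *m invmx (V j)
      else 0
  end.

(* pertP x k j = pert_j(x) for j <= k *)
Fixpoint pertP (x : forall i : nat, 'cV[C]_(d i)) (k : nat) :
    forall j : nat, 'cV[C]_(d j) :=
  match k with
  | 0 => fun j => x j
  | k'.+1 => fun j =>
      if j == k'.+1 then
        x j + \sum_(j' < k'.+1) ((-1) ^+ (k' - j')%N *: (Dm j j' *m pertP x k' j'))
      else pertP x k' j
  end.

Definition pert (x : state) : state := restr (fun i => pertP (ext x) i i).

End Defs.

(* Main.v *)
Require Import Defs.
From HB Require Import structures.
From mathcomp Require Import all_boot all_order all_algebra.
From mathcomp Require Import complex.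
From mathcomp Require Import all_classical all_reals all_analysis.
From mathcomp Require Import ring lra zify.
Import Order.TTheory GRing.Theory Num.Theory numFieldNormedType.Exports.
Local Open Scope ring_scope.
Local Open Scope classical_set_scope.
Local Open Scope complex_scope.



Section CN.
Context {R : realType}.
Local Notation C := (R[i])%type.

Definition cn (z : C) : R := let: Complex a b := z in Num.sqrt (a ^+ 2 + b ^+ 2).

Lemma normE (z : C) : `|z| = (cn z)%:C.
Proof. by rewrite normc_def; case: z. Qed.

Lemma cn_ge0 z : 0 <= cn z.
Proof. by rewrite -(lecR 0 (cn z)) -normE; exact: normr_ge0. Qed.

Lemma cnM a b : cn (a * b) = cn a * cn b.
Proof. by apply: (@complexI R); rewrite rmorphM /= -!normE normrM. Qed.

Lemma cn_eq0 z : cn z = 0 -> z = 0.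
Proof. by move=> h; apply/eqP; rewrite -normr_eq0 normE h. Qed.

Lemma cn0 : cn 0 = 0.
Proof. by apply: (@complexI R); rewrite -normE normr0. Qed.

Lemma cnD a b : cn (a + b) <= cn a + cn b.
Proof. by rewrite -lecR rmorphD /= -!normE ler_normD. Qed.

Lemma cnN a : cn (- a) = cn a.
Proof. by apply: (@complexI R); rewrite -!normE normrN. Qed.

Lemma cnB a b : cn (a - b) = cn (b - a).
Proof. by rewrite -cnN opprB. Qed.

Lemma cn_sign k : cn ((-1) ^+ k) = 1.
Proof. by apply: (@complexI R); rewrite -normE normrX normrN1 expr1n. Qed.

Lemma cn_Re z : `|complex.Re z| <= cn z.
Proof.
case: z => a b; rewrite /cn /=.
rewrite -sqrtr_sqr ler_sqrt ?addr_ge0 ?sqr_ge0 // lerDl sqr_ge0 //.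
Qed.

Lemma cn_Im z : `|complex.Im z| <= cn z.
Proof.
case: z => a b; rewrite /cn /=.
rewrite -sqrtr_sqr ler_sqrt ?addr_ge0 ?sqr_ge0 // lerDr sqr_ge0 //.
Qed.

Lemma cn_ReIm z : cn z <= `|complex.Re z| + `|complex.Im z|.
Proof.
case: z => a b; rewrite /cn /=.
rewrite -[X in _ <= X]ger0_norm ?addr_ge0 // -sqrtr_sqr ler_sqrt ?sqr_ge0 //.
have ha := normr_ge0 a; have hb := normr_ge0 b.
rewrite sqrrD !real_normK ?num_real //; nra.
Qed.

Lemma cn_sum (I : Type) (s : seq I) (f : I -> C) :
  cn (\sum_(i <- s) f i) <= \sum_(i <- s) cn (f i).
Proof.
elim: s => [|x s IH]; first by rewrite !big_nil cn0.
rewrite !big_cons; apply: (le_trans (cnD _ _)); exact: lerD.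
Qed.

End CN.

Section NM.
Context {R : realType}.
Local Notation C := (R[i])%type.
Context {m : nat} {nm : 'cV[C]_m -> R} (hn : is_norm R m nm).

Lemma nm_ge0 x : 0 <= nm x. Proof. by case: hn. Qed.
Lemma nm_eq0 x : nm x = 0 -> x = 0. Proof. by case: hn => _ h _ _; apply: h. Qed.
Lemma nmD x y : nm (x + y) <= nm x + nm y. Proof. by case: hn. Qed.
Lemma nmZ a x : nm (a *: x) = cn a * nm x.
Proof. case: hn => _ _ h _; apply: (@complexI R); by rewrite h rmorphM /= normE. Qed.
Lemma nm0 : nm 0 = 0.
Proof. by rewrite -(scale0r (0 : 'cV[C]_m)) nmZ cn0 mul0r. Qed.
Lemma nmN x : nm (- x) = nm x.
Proof. by rewrite -scaleN1r nmZ cnN (_ : cn 1 = 1) ?mul1r // -(expr0 (-1 : C)) cn_sign. Qed.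
Lemma nmB x y : nm (x - y) = nm (y - x).
Proof. by rewrite -nmN opprB. Qed.
Lemma nm_tri x y z : nm (x - z) <= nm (x - y) + nm (y - z).
Proof. have -> : x - z = (x - y) + (y - z) by rewrite addrA subrK.
exact: nmD. Qed.
Lemma nm_sum (I : Type) (s : seq I) (f : I -> 'cV[C]_m) :
  nm (\sum_(i <- s) f i) <= \sum_(i <- s) nm (f i).
Proof.
elim: s => [|x s IH]; first by rewrite !big_nil nm0.
rewrite !big_cons; apply: (le_trans (nmD _ _)); exact: lerD.
Qed.

Definition s1 (x : 'cV[C]_m) : R := \sum_(r < m) cn (x r 0).
Definition Ku : R := \sum_(r < m) nm (delta_mx r 0).

Lemma s1_ge0 x : 0 <= s1 x.
Proof. by apply: sumr_ge0 => r _; apply: cn_ge0. Qed.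

Lemma Ku_ge0 : 0 <= Ku.
Proof. by apply: sumr_ge0 => r _; apply: nm_ge0. Qed.

Lemma coord_le_s1 (x : 'cV[C]_m) (r : 'I_m) : cn (x r 0) <= s1 x.
Proof.
rewrite /s1 (bigD1 r) //= lerDl; apply: sumr_ge0 => i _; apply: cn_ge0.
Qed.

Lemma nm_upper x : nm x <= s1 x * Ku.
Proof.
have hx : x = \sum_(r < m) x r 0 *: delta_mx r 0.
  apply/matrixP => i j; rewrite summxE (bigD1 i) //= !mxE ord1 !eqxx mulr1.
  rewrite big1 ?addr0 // => k /negbTE kn; rewrite !mxE eq_sym kn mulr0 //.
rewrite {1}hx; apply: (le_trans (nm_sum _ _ _)); rewrite /s1 /Ku mulr_suml.
apply: ler_sum => r _; rewrite nmZ; apply: ler_wpM2l; first exact: cn_ge0.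
rewrite (bigD1 r) //= lerDl; apply: sumr_ge0 => i _; apply: nm_ge0.
Qed.

End NM.

Section CV.
Context {R : realType}.
Local Notation C := (R[i])%type.

Definition cv0 (f : nat -> R) := forall e : R, 0 < e ->
  exists N, forall k, (N <= k)%N -> `|f k| < e.
Definition ccv (u : nat -> C) (l : C) := cv0 (fun k => cn (u k - l)).

Lemma cv0_cvg f : cv0 f -> f @ \oo --> (0 : R).
Proof.
move=> h; apply/cvgrPdist_lt => e e0; have [N hN] := h e e0.
by exists N => // k /= Nk; rewrite sub0r normrN; apply: hN.
Qed.

Lemma cvg_eps (v : nat -> R) l : v @ \oo --> l ->
  forall e : R, 0 < e -> exists N, forall k, (N <= k)%N -> `|v k - l| < e.
Proof.
move=> /cvgrPdist_lt h e e0; have [N _ hN] := h e e0.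
by exists N => k Nk; rewrite distrC; apply: (hN k).
Qed.

Lemma incr_ge (phi : nat -> nat) : increasing_seq phi -> forall k, (k <= phi k)%N.
Proof.
move=> /increasing_seqP h; elim=> [|k IH] //.
by apply: (leq_ltn_trans IH); apply: h.
Qed.

Lemma incr_comp (phi psi : nat -> nat) : increasing_seq phi -> increasing_seq psi ->
  increasing_seq (phi \o psi).
Proof. by move=> h1 h2 a b /=; rewrite h1; exact: h2. Qed.

Lemma cv0_sub {f phi} : cv0 f -> increasing_seq phi -> cv0 (f \o phi).
Proof.
move=> h hp e e0; have [N hN] := h e e0; exists N => k Nk /=.
by apply: hN; apply: (leq_trans Nk); apply: incr_ge.
Qed.

Lemma ccv_sub {u l phi} : ccv u l -> increasing_seq phi -> ccv (u \o phi) l.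
Proof. by move=> h hp; exact: (cv0_sub h hp). Qed.

Lemma cv0_le {f g} : (forall k, `|g k| <= `|f k|) -> cv0 f -> cv0 g.
Proof.
move=> hle h e e0; have [N hN] := h e e0; exists N => k Nk.
apply: (le_lt_trans (hle k)); exact: hN.
Qed.

Lemma cv0_add {f g} : cv0 f -> cv0 g -> cv0 (fun k => f k + g k).
Proof.
move=> hf hg e e0.
have e2 : 0 < e / 2 by rewrite divr_gt0.
have [N1 h1] := hf _ e2; have [N2 h2] := hg _ e2.
exists (maxn N1 N2) => k Nk.
apply: (le_lt_trans (ler_normD _ _)).
rewrite [e](splitr e); apply: ltrD; [apply: h1 | apply: h2];
  apply: (leq_trans _ Nk); rewrite ?leq_maxl ?leq_maxr //.
Qed.

Lemma cv0_0 : cv0 (fun _ => 0).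
Proof. by move=> e e0; exists 0%N => k _; rewrite normr0. Qed.

Lemma cv0_sum (I : Type) (s : seq I) (f : I -> nat -> R) :
  (forall i, cv0 (f i)) -> cv0 (fun k => \sum_(i <- s) f i k).
Proof.
move=> h; elim: s => [|x s IH].
  by apply: (cv0_le _ cv0_0) => k; rewrite big_nil normr0.
by apply: (cv0_le _ (cv0_add (h x) IH)) => k; rewrite big_cons.
Qed.

Lemma cv0_scale c {f} : cv0 f -> cv0 (fun k => c * f k).
Proof.
move=> h e e0.
have c1 : 0 < `|c| + 1 by rewrite ltr_wpDl.
have [N hN] := h (e / (`|c| + 1)) (divr_gt0 e0 c1).
exists N => k Nk; rewrite normrM.
have := hN k Nk; rewrite ltr_pdivlMr // => h2.
apply: (le_lt_trans _ h2); rewrite mulrC ler_wpM2l //.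
by rewrite lerDl.
Qed.

Lemma cv0_geo (r : R) : 0 <= r -> r < 1 -> cv0 (fun k => r ^+ k).
Proof.
move=> r0 r1 e e0.
have /cvg_eps h : (GRing.exp r : R ^nat) @ \oo --> 0.
  by apply: cvg_expr; rewrite ger0_norm.
have [N hN] := h e e0; exists N => k Nk; have := hN k Nk.
by rewrite subr0.
Qed.

Lemma ccv_Re {u l} : ccv u l -> cv0 (fun k => complex.Re (u k) - complex.Re l).
Proof.
apply: cv0_le => k; rewrite [X in _ <= X]ger0_norm ?cn_ge0 //.
apply: (le_trans _ (cn_Re _)).
by case: (u k) => a b; case: l => c d.
Qed.

Lemma bw_real (v : nat -> R) B : (forall k, `|v k| <= B) ->
  exists2 phi, increasing_seq phi & exists l, cv0 (fun k => v (phi k) - l).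
Proof.
move=> hB.
have bnd : bounded_fun v.
  exists B; split; first by rewrite num_real.
  move=> x Bx y _; apply: (le_trans (hB y)); exact: ltW.
have [phi hphi /cvg_ex [l hl]] := bolzano_weierstrass bnd.
exists phi => //; exists l; move=> e e0.
have [N hN] := cvg_eps _ _ hl e e0; exists N => k Nk; exact: hN.
Qed.

Lemma bw_complex (u : nat -> C) B : (forall k, cn (u k) <= B) ->
  exists2 phi, increasing_seq phi & exists l, ccv (u \o phi) l.
Proof.
move=> hB.
have [phi1 h1 [l1 hl1]] := @bw_real (fun k => complex.Re (u k)) B
  (fun k => le_trans (cn_Re _) (hB k)).
have [phi2 h2 [l2 hl2]] := @bw_real (fun k => complex.Im (u (phi1 k))) B
  (fun k => le_trans (cn_Im _) (hB _)).
exists (phi1 \o phi2); first exact: incr_comp.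
exists (Complex l1 l2).
have hl1' := cv0_sub hl1 h2.
have hA : cv0 (fun k => `|complex.Re (u (phi1 (phi2 k))) - l1|).
  by apply: (cv0_le _ hl1') => k; rewrite normr_id.
have hB' : cv0 (fun k => `|complex.Im (u (phi1 (phi2 k))) - l2|).
  by apply: (cv0_le _ hl2) => k; rewrite normr_id.
apply: (cv0_le _ (cv0_add hA hB')) => k /=.
rewrite ger0_norm ?cn_ge0 // ger0_norm ?addr_ge0 //.
apply: (le_trans (cn_ReIm _)).
by case: (u (phi1 (phi2 k))) => a b /=.
Qed.

End CV.

Section BW.
Context {R : realType}.
Local Notation C := (R[i])%type.

Lemma bw_fin (I : finType) (u : I -> nat -> C) :
  (forall i, exists B, forall k, cn (u i k) <= B) ->
  exists2 phi, increasing_seq phi & forall i, exists l, ccv (u i \o phi) l.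
Proof.
move=> hb.
suff H0 : forall s : seq I, exists2 phi, increasing_seq phi &
    forall i, i \in s -> exists l, ccv (u i \o phi) l.
  have [phi hphi H] := H0 (enum I).
  by exists phi => // i; apply: H; rewrite mem_enum.
elim=> [|i s [phi hphi H]].
  by exists id => //.
have [B hB] := hb i.
have [psi hpsi [l hl]] := @bw_complex R (u i \o phi) B (fun k => hB (phi k)).
exists (phi \o psi); first exact: incr_comp.
move=> j; rewrite in_cons => /orP [/eqP -> | js]; first by exists l.
have [l' hl'] := H j js; exists l'; exact: (ccv_sub hl' hpsi).
Qed.

Lemma cn_real (r : R) : cn r%:C = `|r|.
Proof. by rewrite /cn /= expr0n /= addr0 sqrtr_sqr. Qed.

Lemma cv0_const_le (c : R) g : (forall k, c <= g k) -> cv0 g -> c <= 0.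
Proof.
move=> hc hg; rewrite leNgt; apply/negP => c0.
have [N hN] := hg c c0; have := hN N (leqnn N).
by rewrite ltNge => /negP; apply; apply: (le_trans (hc N)); apply: ler_norm.
Qed.

Section NMlow.
Context {m : nat} {nm : 'cV[C]_m -> R} (hn : is_norm R m nm).

Lemma s1Z a (x : 'cV[C]_m) : s1 (a *: x) = cn a * s1 x.
Proof. by rewrite /s1 mulr_sumr; apply: eq_bigr => r _; rewrite !mxE cnM. Qed.

Lemma s1B (x y : 'cV[C]_m) : s1 (x - y) = s1 (y - x).
Proof. by apply: eq_bigr => r _; rewrite !mxE cnB. Qed.

Lemma nm_lower : exists2 c, 0 < c & forall x, c * s1 x <= nm x.
Proof.
have [//|hno] := pselect (exists2 c, 0 < c & forall x, c * s1 x <= nm x).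
exfalso.
have hx : forall k : nat, exists x : 'cV[C]_m, nm x < (2^-1) ^+ k * s1 x.
  move=> k; apply/not_existsP => hall; apply: hno.
  exists ((2^-1) ^+ k); first by rewrite exprn_gt0 // invr_gt0.
  move=> x; have := hall x; rewrite ltNge => /negP; by case: leP.
have [xs hxs] := choice hx.
have s1pos k : 0 < s1 (xs k).
  rewrite lt0r s1_ge0 andbT; apply/eqP => h0; move: (hxs k).
  by rewrite h0 mulr0 ltNge nm_ge0.
pose ys k := ((s1 (xs k))^-1)%:C *: xs k.
have s1ys k : s1 (ys k) = 1.
  by rewrite s1Z cn_real ger0_norm ?invr_ge0 ?s1_ge0 // mulVf // gt_eqF.
have nmys k : nm (ys k) < (2^-1) ^+ k.
  rewrite nmZ // cn_real ger0_norm ?invr_ge0 ?s1_ge0 //.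
  by rewrite ltr_pdivrMl // mulrC.
have hb : forall r : 'I_m, exists B, forall k, cn (ys k r 0) <= B.
  by move=> r; exists 1 => k; rewrite -(s1ys k); exact: coord_le_s1.
have [phi hphi hl] := @bw_fin 'I_m (fun r k => ys k r 0) hb.
have [lf hlf] := choice hl.
pose yst : 'cV[C]_m := \col_r lf r.
have hs1 : cv0 (fun k => s1 (ys (phi k) - yst)).
  apply: (cv0_le _ (cv0_sum _ (index_enum 'I_m) (fun r k => cn (ys (phi k) r 0 - lf r)) hlf)) => k /=.
  suff -> : s1 (ys (phi k) - yst) = \sum_(i <- index_enum 'I_m) cn (ys (phi k) i 0 - lf i) by [].
  by apply: eq_bigr => r _; rewrite !mxE.
have ge : forall k, nm yst <= (2^-1) ^+ (phi k) + s1 (ys (phi k) - yst) * @Ku R m nm.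
  move=> k; have h1 := nmD hn (ys (phi k)) (yst - ys (phi k)).
  rewrite addrC subrK in h1; apply: (le_trans h1); apply: lerD; first exact: ltW.
  rewrite (nmB hn); exact: (nm_upper hn).
have cg : cv0 (fun k => (2^-1) ^+ (phi k) + s1 (ys (phi k) - yst) * @Ku R m nm).
  apply: cv0_add.
    have h2 : cv0 (fun k => (2^-1 : R) ^+ k).
      by apply: cv0_geo; rewrite ?invr_ge0 ?invf_lt1 ?ltr1n.
    exact: (cv0_sub h2 hphi).
  by apply: (cv0_le _ (cv0_scale (@Ku R m nm) hs1)) => k; rewrite mulrC.
have y0 : yst = 0.
  apply: (nm_eq0 hn); apply/le_anti; rewrite nm_ge0 // andbT.
  exact: (cv0_const_le _ _ ge cg).
have [N hN] := hs1 1 ltr01; have := hN N (leqnn N).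
by rewrite y0 subr0 s1ys normr1 ltxx.
Qed.

End NMlow.
End BW.

Section OP.
Context {R : realType}.
Local Notation C := (R[i])%type.
Context {m p : nat} {nm : 'cV[C]_m -> R} {np : 'cV[C]_p -> R}
  (hm : is_norm R m nm) (hp : is_norm R p np).

Lemma nm_gt0 (x : 'cV[C]_m) : x != 0 -> 0 < nm x.
Proof.
move=> xn; rewrite lt0r nm_ge0 // andbT; apply/eqP => h.
by move: xn; rewrite (nm_eq0 hm _ h) eqxx.
Qed.

Lemma s1_mul (A : 'M[C]_(p, m)) (x : 'cV[C]_m) :
  s1 (A *m x) <= (\sum_(r < p) \sum_(c < m) cn (A r c)) * s1 x.
Proof.
rewrite /s1 mulr_suml; apply: ler_sum => r _; rewrite mxE.
apply: (le_trans (cn_sum _ _ _)); rewrite mulr_suml; apply: ler_sum => c _.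
rewrite cnM; apply: ler_wpM2l; first exact: cn_ge0.
exact: coord_le_s1.
Qed.

Lemma op_bound (A : 'M[C]_(p, m)) : exists K, forall x, np (A *m x) <= K * nm x.
Proof.
have [c c0 hc] := nm_lower hm.
set As := \sum_(r < p) \sum_(c < m) cn (A r c).
have As0 : 0 <= As by apply: sumr_ge0 => r _; apply: sumr_ge0 => c' _; exact: cn_ge0.
exists (@Ku R p np * As / c) => x.
apply: (le_trans (nm_upper hp _)).
have h1 : s1 (A *m x) <= As * (nm x / c).
  apply: (le_trans (s1_mul A x)); apply: ler_wpM2l => //.
  by rewrite ler_pdivlMr // mulrC hc.
apply: (le_trans (ler_wpM2r (Ku_ge0 hp) h1)).
suff -> : As * (nm x / c) * @Ku R p np = @Ku R p np * As / c * nm x by [].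
by ring.
Qed.

Lemma opnorm_le (A : 'M[C]_(p, m)) x : np (A *m x) <= opnorm R m p nm np A * nm x.
Proof.
have [->|xn] := eqVneq x 0; first by rewrite mulmx0 (nm0 hp) (nm0 hm) mulr0.
have nx := nm_gt0 _ xn.
have [K hK] := op_bound A.
have ub : has_ubound [set np (A *m x) / nm x | x in [set x : 'cV[C]_m | x != 0]].
  exists K => y [z zn <-]; rewrite ler_pdivrMr ?hK //; exact: nm_gt0 _ zn.
rewrite -ler_pdivrMr //; apply: (ub_le_sup ub); by exists x.
Qed.

Lemma opnorm_ge0 (A : 'M[C]_(p, m)) : (0 < m)%N -> 0 <= opnorm R m p nm np A.
Proof.
move=> m0; pose x0 : 'cV[C]_m := delta_mx (Ordinal m0) 0.
have xn : x0 != 0.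
  apply/eqP => /matrixP /(_ (Ordinal m0) 0); rewrite !mxE !eqxx /=.
  by move/eqP; rewrite oner_eq0.
have := le_trans (nm_ge0 hp _) (opnorm_le A x0).
by rewrite pmulr_lge0 // nm_gt0.
Qed.

End OP.

Section Pert.
Context {R : realType}.
Local Notation C := (R[i])%type.
Context {n : nat} {d : nat -> nat}
  {L : forall i : nat, 'M[C]_(d i)}
  {Cc : forall k : nat, 'M[C]_(d k.+1, d k)}
  {V : forall i : nat, 'M[C]_(d i)}
  {lam : forall i : nat, 'I_(d i) -> C}.
Local Notation st := (state R n d).
Local Notation DM := (Dm R d L Cc V lam).
Local Notation PP := (pertP R d L Cc V lam).

Lemma extE (x : st) i (h : (i < n)%N) : ext R n d x i = x (Ordinal h).
Proof.
rewrite /ext.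
have : forall (b : bool) (e : (i < n)%N = b),
  (match b as b0 return ((i < n)%N = b0 -> 'cV[C]_(d i)) with
   | true => fun h0 => x (Ordinal h0)
   | false => fun _ => 0 end) e = x (Ordinal h).
  case=> e; first by rewrite (bool_irrelevance e h).
  by exfalso; move: h; rewrite e.
by apply.
Qed.

Lemma ext_restr (f : forall i : nat, 'cV[C]_(d i)) i : (i < n)%N ->
  ext R n d (restr R n d f) i = f i.
Proof. by move=> h; rewrite (extE _ _ h). Qed.

Lemma idlike_id k : idlike R d k k = 1%:M.
Proof. by apply/matrixP => a b; rewrite !mxE. Qed.

Lemma Dm_diag k : DM k k = 1%:M.
Proof. by case: k => [|k] /=; rewrite ?eqxx idlike_id. Qed.

Lemma Dm_lt k j : (j <= k)%N -> DM k.+1 j =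
  let M := invmx (V k.+1) *m Cc k *m DM k j *m V j in
  let Ct := \matrix_(l < d k.+1, m < d j)
              (M l m * (1 - lam j m / lam k.+1 l)^-1) in
  invmx (L k.+1) *m V k.+1 *m Ct *m invmx (V j).
Proof.
move=> jk /=; have -> : (j == k.+1) = false.
  by apply/negbTE; rewrite neq_ltn ltnS jk.
by rewrite jk.
Qed.

Lemma pertP_stable x k j : (j <= k)%N -> PP x k j = PP x j j.
Proof.
elim: k => [|k IH] jk; first by move: jk; rewrite leqn0 => /eqP ->.
rewrite leq_eqVlt in jk; case/orP: jk => [/eqP -> //|jk].
rewrite /= ltn_eqF //; apply: IH; by rewrite -ltnS.
Qed.

Lemma pertP_succ x k : PP x k.+1 k.+1 =
  x k.+1 + \sum_(j < k.+1) ((-1) ^+ (k - j)%N *: (DM k.+1 j *m PP x j j)).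
Proof.
rewrite /= eqxx; congr (_ + _); apply: eq_bigr => j _.
by rewrite pertP_stable // -ltnS.
Qed.

Lemma pertP_inv x k : x k =
  \sum_(j < k.+1) ((-1) ^+ (k - j)%N *: (DM k j *m PP x j j)).
Proof.
rewrite big_ord_recr /= subnn expr0 scale1r Dm_diag mul1mx.
case: k => [|k]; first by rewrite big_ord0 add0r.
rewrite pertP_succ addrA addrC.
have -> : \sum_(i < k.+1) (-1) ^+ (k.+1 - i)%N *: (DM k.+1 i *m PP x i i)
  = - \sum_(j < k.+1) (-1) ^+ (k - j)%N *: (DM k.+1 j *m PP x j j).
  rewrite -sumrN; apply: eq_bigr => j _.
  by rewrite subSn -1?ltnS // exprS mulN1r scaleNr.
by rewrite addrA addrN add0r.
Qed.

End Pert.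

Section Sylv.
Context {R : realType}.
Local Notation C := (R[i])%type.

Lemma scal_id (a b mm : C) : a != 0 -> b != a ->
  a * (mm / (1 - b / a)) - mm / (1 - b / a) * b = a * mm.
Proof.
move=> a0 ba.
have ab : a - b != 0 by rewrite subr_eq0 eq_sym.
have -> : 1 - b / a = (a - b) / a.
  by rewrite mulrBl divff.
rewrite invf_div.
set t := mm * (a / (a - b)).
have -> : a * t - t * b = t * (a - b) by rewrite mulrBr mulrC.
by rewrite /t -mulrA divfK // mulrC.
Qed.
Lemma sylv_gen {p m : nat} (Li Vi Di : 'M[C]_p) (Lj Vj Dj : 'M[C]_m)
  (B Ct : 'M[C]_(p, m)) :
  Li \in unitmx -> Vi \in unitmx -> Vj \in unitmx ->
  Li *m Vi = Vi *m Di -> Lj *m Vj = Vj *m Dj ->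
  Di *m Ct - Ct *m Dj = Di *m (invmx Vi *m B *m Vj) ->
  Li *m (invmx Li *m Vi *m Ct *m invmx Vj)
    - (invmx Li *m Vi *m Ct *m invmx Vj) *m Lj = B.
Proof.
move=> uLi uVi uVj hi hj key.
have hj' : invmx Vj *m Lj = Dj *m invmx Vj.
  have : invmx Vj *m (Lj *m Vj) *m invmx Vj = invmx Vj *m (Vj *m Dj) *m invmx Vj.
    by rewrite hj.
  by rewrite !mulmxA mulVmx // mul1mx -!mulmxA mulmxV // mulmx1.
have hi' : invmx Li *m Vi *m Di = Vi.
  by rewrite -mulmxA -hi mulmxA mulVmx // mul1mx.
have E1 : Li *m (invmx Li *m Vi *m Ct *m invmx Vj) = invmx Li *m Vi *m Di *m Ct *m invmx Vj.
  by rewrite hi' !mulmxA mulmxV // mul1mx.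
have E2 : (invmx Li *m Vi *m Ct *m invmx Vj) *m Lj
    = invmx Li *m Vi *m (Ct *m Dj) *m invmx Vj.
  by rewrite -!mulmxA hj'.
rewrite E1 E2 -[invmx Li *m Vi *m Di *m Ct]mulmxA -mulmxBl -mulmxBr key.
by rewrite !mulmxA hi' mulmxV // mul1mx -mulmxA mulmxV // mulmx1.
Qed.

Lemma sylv {p m : nat} (Li : 'M[C]_p) (Lj : 'M[C]_m) (Vi : 'M[C]_p) (Vj : 'M[C]_m)
  (li : 'I_p -> C) (lj : 'I_m -> C) (B : 'M[C]_(p, m)) :
  Li \in unitmx -> Vi \in unitmx -> Vj \in unitmx ->
  Li *m Vi = Vi *m diag_mx (\row_k li k) -> Lj *m Vj = Vj *m diag_mx (\row_k lj k) ->
  (forall l, li l != 0) -> (forall l c, lj c != li l) ->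
  Li *m (invmx Li *m Vi *m (\matrix_(l < p, c < m)
          ((invmx Vi *m B *m Vj) l c * (1 - lj c / li l)^-1)) *m invmx Vj)
    - (invmx Li *m Vi *m (\matrix_(l < p, c < m)
          ((invmx Vi *m B *m Vj) l c * (1 - lj c / li l)^-1)) *m invmx Vj) *m Lj = B.
Proof.
move=> uLi uVi uVj hi hj li0 lij.
apply: (@sylv_gen _ _ Li Vi (diag_mx (\row_k li k)) Lj Vj (diag_mx (\row_k lj k))) => //.
move: (invmx Vi *m B *m Vj) => M0.
apply/matrixP => l c; rewrite !mul_diag_mx mul_mx_diag !mxE.
exact: scal_id.
Qed.

End Sylv.

Local Close Scope complex_scope.


Section Main.
Context {R : realType}.
Local Notation C := (R[i])%type.
Context (n : nat) (d : nat -> nat)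
  (L : forall i : nat, 'M[C]_(d i))
  (Cc : forall k : nat, 'M[C]_(d k.+1, d k))
  (V : forall i : nat, 'M[C]_(d i))
  (lam : forall i : nat, 'I_(d i) -> C).
Context (hLu : forall i : nat, (i < n)%N -> L i \in unitmx)
  (hVu : forall i : nat, (i < n)%N -> V i \in unitmx)
  (hLV : forall i : nat, (i < n)%N -> L i *m V i = V i *m diag_mx (\row_k lam i k))
  (hspec : forall i j : nat, (i < n)%N -> (j < n)%N -> i <> j ->
     forall a : R[i], ~ (eigenvalue (L i) a /\ eigenvalue (L j) a)).
Local Notation st := (state R n d).
Local Notation DM := (Dm R d L Cc V lam).
Local Notation PP := (pertP R d L Cc V lam).

Lemma eig_lam {i} (hi : (i < n)%N) l : eigenvalue (L i) (lam i l).
Proof.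
apply/eigenvalueP; exists (row l (invmx (V i))).
  have h : invmx (V i) *m L i = diag_mx (\row_k lam i k) *m invmx (V i).
    have : invmx (V i) *m (L i *m V i) *m invmx (V i)
         = invmx (V i) *m (V i *m diag_mx (\row_k lam i k)) *m invmx (V i).
      by rewrite hLV.
    by rewrite !mulmxA mulVmx ?hVu // mul1mx -!mulmxA mulmxV ?hVu // mulmx1.
  rewrite -row_mul h mul_diag_mx; apply/rowP => c; rewrite !mxE //.
apply/eqP => h0.
have : row l (invmx (V i) *m V i) = 0 by rewrite row_mul h0 mul0mx.
rewrite mulVmx ?hVu // => /rowP /(_ l); rewrite !mxE eqxx /=.
by move/eqP; rewrite oner_eq0.
Qed.

Lemma lam_neq0 {i} (hi : (i < n)%N) l : lam i l != 0.
Proof.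
apply/eqP => h0; have /eigenvalueP [v hv vn] := eig_lam hi l.
move: hv; rewrite h0 scale0r => hv.
have : v *m L i *m invmx (L i) = 0 by rewrite hv mul0mx.
by rewrite -mulmxA mulmxV ?hLu // mulmx1 => v0; move: vn; rewrite v0 eqxx.
Qed.

Lemma lam_diff {i j} (hi : (i < n)%N) (hj : (j < n)%N) : i <> j ->
  forall l c, lam j c != lam i l.
Proof.
move=> ij l c; apply/eqP => e; apply: (hspec i j hi hj ij (lam i l)); split.
  exact: eig_lam.
rewrite -e; exact: eig_lam.
Qed.

Lemma Dm_sylv k j : (k.+1 < n)%N -> (j <= k)%N ->
  L k.+1 *m DM k.+1 j - DM k.+1 j *m L j = Cc k *m DM k j.
Proof.
move=> kn jk; have jn : (j < n)%N by apply: (leq_ltn_trans jk); apply: ltnW.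
rewrite (Dm_lt k j jk) /=.
rewrite -[invmx (V k.+1) *m Cc k *m DM k j]mulmxA.
apply: sylv; rewrite ?hLu ?hVu ?hLV //.
- by move=> l; apply: lam_neq0.
- move=> l c; apply: lam_diff => // /eqP; rewrite eq_sym; apply/negP.
  by rewrite neq_ltn ltnS jk.
Qed.

Lemma ext_Lin (z : st) i : (i < n)%N -> ext R n d (Lin R n d L Cc z) i =
  L i *m ext R n d z i +
    match i as i0 return 'cV[C]_(d i0) with
    | 0 => 0
    | k.+1 => Cc k *m ext R n d z k
    end.
Proof. by move=> h; rewrite /Lin ext_restr. Qed.

Lemma pert_conj (z : st) i : (i < n)%N ->
  PP (ext R n d (Lin R n d L Cc z)) i i = L i *m PP (ext R n d z) i i.
Proof.
elim/ltn_ind: i => -[|k] IH hn.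
  by rewrite /= ext_Lin // addr0.
rewrite !pertP_succ ext_Lin //.
rewrite (eq_bigr (fun j : 'I_k.+1 => (-1) ^+ (k - j)%N *:
   (DM k.+1 j *m (L j *m PP (ext R n d z) j j)))); last first.
  move=> j _; rewrite IH //; apply: (ltn_trans (ltn_ord j)); exact: hn.
rewrite mulmxDr -addrA; congr (_ + _).
rewrite {1}(@pertP_inv R d L Cc V lam (ext R n d z) k) !mulmx_sumr -big_split.
apply: eq_bigr => j _; set D1 := DM k.+1 j; set D2 := DM k j; rewrite /= -!scalemxAr -scalerDr; congr (_ *: _).
rewrite !mulmxA -mulmxDl; congr (_ *m _).
have := Dm_sylv k j hn (ltn_ord j : (j <= k)%N); rewrite -/D1 -/D2; move/eqP; rewrite subr_eq => /eqP ->.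
by rewrite addrC.
Qed.

Lemma pert_Lin (z : st) : pert R n d L Cc V lam (Lin R n d L Cc z) =
  Nom R n d L (pert R n d L Cc V lam z).
Proof.
apply: (@functional_extensionality_dep 'I_n (fun i => 'cV[C]_(d i))) => i.
by rewrite /pert /restr /Nom (pert_conj z i (ltn_ord i)).
Qed.

Lemma pert_iter (z : st) t : pert R n d L Cc V lam (iter t (Lin R n d L Cc) z) =
  iter t (Nom R n d L) (pert R n d L Cc V lam z).
Proof. by elim: t => [|t IH] //=; rewrite pert_Lin IH. Qed.

End Main.


Lemma subseq_crit {R : realType} (f : nat -> R) :
  (forall phi, increasing_seq phi ->
     exists2 psi, increasing_seq psi & cv0 (fun k => f (phi (psi k)))) -> cv0 f.
Proof.
move=> H; have [//|hno] := pselect (cv0 f); exfalso.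
have [e] : exists e : R, ~ (0 < e -> exists N, forall k, (N <= k)%N -> `|f k| < e).
  by apply/existsNP.
move=> he.
have e0 : 0 < e.
  case: (boolP (0 < e)) => // h; exfalso; apply: he => h0; by rewrite h0 in h.
have hg : forall N : nat, exists k, (N <= k)%N /\ e <= `|f k|.
  move=> N; apply/not_existsP => hall; apply: he => _; exists N => k Nk.
  rewrite ltNge; apply/negP => ek; apply: (hall k); split => //.
have [g hgP] := choice hg.
pose phi := fix phi k := if k is k'.+1 then g (phi k').+1 else g 0%N.
have hphi : increasing_seq phi.
  by apply/increasing_seqP => k /=; have [h _] := hgP (phi k).+1.
have [psi hpsi hc] := H phi hphi.
have key : forall m, e <= `|f (phi m)|.
  by case=> [|m] /=; [case: (hgP 0%N) | case: (hgP (phi m).+1)].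
have [N hN] := hc e e0; have := hN N (leqnn N).
by rewrite ltNge key.
Qed.

Section Main2.
Context {R : realType}.
Local Notation C := (R[i])%type.
Context (n : nat) (d : nat -> nat) (nrm : forall i : nat, 'cV[C]_(d i) -> R)
  (L : forall i : nat, 'M[C]_(d i))
  (Cc : forall k : nat, 'M[C]_(d k.+1, d k))
  (V : forall i : nat, 'M[C]_(d i))
  (lam : forall i : nat, 'I_(d i) -> C).
Context (hd : forall i : nat, (i < n)%N -> (0 < d i)%N)
  (hnrm : forall i : nat, (i < n)%N -> is_norm R (d i) (nrm i))
  (hLu : forall i : nat, (i < n)%N -> L i \in unitmx)
  (hVu : forall i : nat, (i < n)%N -> V i \in unitmx)
  (hLV : forall i : nat, (i < n)%N -> L i *m V i = V i *m diag_mx (\row_k lam i k))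
  (hspec : forall i j : nat, (i < n)%N -> (j < n)%N -> i <> j ->
     forall a : R[i], ~ (eigenvalue (L i) a /\ eigenvalue (L j) a))
  (hord : forall k : nat, (k.+1 < n)%N ->
     opnorm R (d k) (d k) (nrm k) (nrm k) (L k)
       < opnorm R (d k.+1) (d k.+1) (nrm k.+1) (nrm k.+1) (L k.+1))
  (hlast : opnorm R (d n.-1) (d n.-1) (nrm n.-1) (nrm n.-1) (L n.-1) <= 1).
Local Notation st := (state R n d).
Local Notation rho i := (opnorm R (d i) (d i) (nrm i) (nrm i) (L i)).
Local Notation DM := (Dm R d L Cc V lam).
Local Notation PP := (pertP R d L Cc V lam).
Local Notation ext := (ext R n d).
Local Notation Nom := (Nom R n d L).
Local Notation Lin := (Lin R n d L Cc).
Local Notation pert := (pert R n d L Cc V lam).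
Local Notation normx := (normx R n d nrm).
Local Notation subs := (subs R n d).

Lemma rho_ge0 i : (i < n)%N -> 0 <= rho i.
Proof. by move=> hi; apply: opnorm_ge0; [apply: hnrm | apply: hnrm | apply: hd]. Qed.

Lemma rho_lt i j : (i < j)%N -> (j < n)%N -> rho i < rho j.
Proof.
elim: j => // j IH ij jn.
rewrite ltnS leq_eqVlt in ij; case/orP: ij => [/eqP -> | ij]; first exact: hord.
apply: (lt_trans (IH ij (ltnW jn))); exact: hord.
Qed.

Lemma rho_lt1 i : (i.+1 < n)%N -> rho i < 1.
Proof.
move=> hi; apply: (lt_le_trans _ hlast); apply: rho_lt.
  by lia.
by lia.
Qed.

Lemma rho_le1 i : (i < n)%N -> rho i <= 1.
Proof.
move=> hi; case: (ltnP i.+1 n) => h; first by apply: ltW; apply: rho_lt1.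
have -> : i = n.-1 by lia.
exact: hlast.
Qed.

Lemma nom_bound (p : st) t (i : 'I_n) :
  nrm i (iter t Nom p i) <= rho i ^+ t * nrm i (p i).
Proof.
elim: t => [|t IH]; first by rewrite expr0 mul1r.
rewrite /= {1}/Defs.Nom.
apply: (le_trans (opnorm_le (hnrm _ (ltn_ord i)) (hnrm _ (ltn_ord i)) _ _)).
rewrite exprS -mulrA; apply: ler_wpM2l => //; exact: rho_ge0.
Qed.

Lemma nom_bound_ext (p : st) t j (hj : (j < n)%N) :
  nrm j (ext (iter t Nom p) j) <= rho j ^+ t * nrm j (ext p j).
Proof. by rewrite !(extE _ _ hj); apply: (nom_bound p t (Ordinal hj)). Qed.

Lemma normx_ge0 x : 0 <= normx x.
Proof. by apply: sumr_ge0 => i _; apply: (nm_ge0 (hnrm _ (ltn_ord i))). Qed.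

Lemma normx_tri x y z : normx (subs x z) <= normx (subs x y) + normx (subs y z).
Proof.
rewrite /Defs.normx -big_split /=; apply: ler_sum => i _.
exact: (nm_tri (hnrm _ (ltn_ord i))).
Qed.

Lemma normx_sym x y : normx (subs x y) = normx (subs y x).
Proof.
by apply: eq_bigr => i _; rewrite /Defs.subs (nmB (hnrm _ (ltn_ord i))).
Qed.


Lemma partA (x : st) :
  cv0 (fun t => normx (subs (iter t Lin x) (iter t Nom (pert x)))).
Proof.
have hb t : iter t Nom (pert x) = pert (iter t Lin x).
  by rewrite (pert_iter n d L Cc V lam hLu hVu hLV hspec).
apply: (cv0_le _ (cv0_sum _ (index_enum 'I_n)
   (fun i t => nrm i (subs (iter t Lin x) (iter t Nom (pert x)) i)) _)).
  by move=> t.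
case=> -[|k] hk.
  apply: (cv0_le _ cv0_0) => t; rewrite hb /Defs.subs /Defs.pert /restr /=.
  by rewrite (extE _ _ hk) subrr (nm0 (hnrm _ hk)) normr0.
have Hjn : forall j : 'I_k.+1, (j < n)%N.
  by move=> j; apply: (ltn_trans (ltn_ord j) hk).
pose opD (j : 'I_k.+1) := opnorm R (d j) (d k.+1) (nrm j) (nrm k.+1) (DM k.+1 j).
pose cj (j : 'I_k.+1) := nrm j (ext (pert x) j).
apply: (cv0_le _ (cv0_sum _ (index_enum 'I_k.+1)
   (fun j t => opD j * (rho j ^+ t * cj j)) _)); last first.
  move=> j; apply: cv0_scale.
  apply: (cv0_le _ (cv0_scale (cj j) (cv0_geo _ (rho_ge0 _ (Hjn j)) (rho_lt1 j _)))).
    by move=> t; rewrite mulrC.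
  exact: (leq_ltn_trans (ltn_ord j) hk).
move=> t /=.
have hn1 := hnrm _ hk.
rewrite ger0_norm ?(nm_ge0 hn1) //.
have opD0 : forall j, 0 <= opD j.
  by move=> j; apply: opnorm_ge0; [apply: hnrm; apply: Hjn | exact: hn1 | apply: hd; apply: Hjn].
rewrite ger0_norm; last first.
  apply: sumr_ge0 => j _; apply: mulr_ge0 => //; apply: mulr_ge0.
    by apply: exprn_ge0; apply: rho_ge0.
  exact: (nm_ge0 (hnrm _ (Hjn j))).
rewrite hb /Defs.subs /Defs.pert /restr.
rewrite [X in nrm _ X](_ : _ = iter t Lin x (Ordinal hk) - PP (ext (iter t Lin x)) k.+1 k.+1) //.
rewrite pertP_succ (extE _ _ hk) opprD addrA subrr add0r.
rewrite (nmN hn1); apply: (le_trans (nm_sum hn1 _ _ _)); apply: ler_sum => j _.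
rewrite (nmZ hn1) cn_sign mul1r.
rewrite -(ext_restr (fun i => PP (ext (iter t Lin x)) i i) j (Hjn j)) -/(Defs.pert _ _ _ _ _ _ _ _).
apply: (le_trans (opnorm_le (hnrm _ (Hjn j)) hn1 _ _)); apply: ler_wpM2l => //.
  exact: opD0.
rewrite -hb; exact: nom_bound_ext.
Qed.

Lemma partB (p : st) phi : increasing_seq phi ->
  exists2 psi, increasing_seq psi &
    exists q : st, cv0 (fun k => normx (subs (iter (phi (psi k)) Nom p) q)).
Proof.
move=> hphi.
pose u (w : {i : 'I_n & 'I_(d i)}) (k : nat) : C :=
  iter (phi k) Nom p (tag w) (tagged w) 0.
have hbnd : forall w, exists B, forall k, cn (u w k) <= B.
  case=> i r; have hi := ltn_ord i; have hn := hnrm _ hi.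
  have [c c0 hc] := nm_lower hn.
  exists (nrm i (p i) / c) => k.
  rewrite /u /=; apply: (le_trans (coord_le_s1 _ r)).
  rewrite ler_pdivlMr // mulrC; apply: (le_trans (hc _)).
  apply: (le_trans (nom_bound p (phi k) i)).
  rewrite -[X in _ <= X]mul1r; apply: ler_wpM2r; first exact: (nm_ge0 hn).
  by apply: exprn_ile1; [apply: rho_ge0 | apply: rho_le1].
have [psi hpsi hl] := bw_fin _ u hbnd.
have [lf hlf] := choice hl.
pose q : st := fun i => \col_r lf (existT _ i r).
exists psi => //; exists q.
apply: (cv0_le _ (cv0_sum _ (index_enum 'I_n)
  (fun i k => s1 (iter (phi (psi k)) Nom p i - q i) * @Ku R (d i) (nrm i)) _)).
  move=> k; rewrite ger0_norm ?normx_ge0 // ger0_norm; last first.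
    by apply: sumr_ge0 => i _; apply: mulr_ge0; [apply: s1_ge0 | apply: (Ku_ge0 (hnrm _ (ltn_ord i)))].
  by apply: ler_sum => i _; apply: (nm_upper (hnrm _ (ltn_ord i))).
move=> i.
apply: (cv0_le _ (cv0_scale (@Ku R (d i) (nrm i))
  (cv0_sum _ (index_enum 'I_(d i))
    (fun r k => cn (u (existT _ i r) (psi k) - lf (existT _ i r))) (fun r => hlf _)))).
move=> k; rewrite mulrC.
have -> : s1 (iter (phi (psi k)) Nom p i - q i) = \sum_(r <- index_enum 'I_(d i))
    cn (u (existT _ i r) (psi k) - lf (existT _ i r)).
  by apply: eq_bigr => r _; rewrite !mxE.
by [].
Qed.

End Main2.


Theorem theorem3 (R : realType) (n : nat) (d : nat -> nat)
  (nrm : forall i : nat, 'cV[R[i]]_(d i) -> R)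
  (L : forall i : nat, 'M[R[i]]_(d i))
  (Cc : forall k : nat, 'M[R[i]]_(d k.+1, d k))
  (V : forall i : nat, 'M[R[i]]_(d i))
  (lam : forall i : nat, 'I_(d i) -> R[i])
  (N1 : 'cV[R[i]]_(d 0%N) -> 'cV[R[i]]_(d 0%N))
  (N : forall k : nat, 'cV[R[i]]_(d k) -> 'cV[R[i]]_(d k.+1) -> 'cV[R[i]]_(d k.+1))
  (tau tauinv : state R n d -> state R n d) :
  (0 < n)%N ->
  (forall i : nat, (i < n)%N -> (0 < d i)%N) ->
  (forall i : nat, (i < n)%N -> is_norm R (d i) (nrm i)) ->
  (* (i) invertible and diagonalizable: L_i V_i = V_i Lambda_i *)
  (forall i : nat, (i < n)%N -> L i \in unitmx) ->
  (forall i : nat, (i < n)%N -> V i \in unitmx) ->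
  (forall i : nat, (i < n)%N ->
     L i *m V i = V i *m diag_mx (\row_k lam i k)) ->
  (* (ii) disjoint spectra *)
  (forall i j : nat, (i < n)%N -> (j < n)%N -> i <> j ->
     forall a : R[i], ~ (eigenvalue (L i) a /\ eigenvalue (L j) a)) ->
  (* (iii) ||L_1|| < ... < ||L_n|| <= 1 *)
  (forall k : nat, (k.+1 < n)%N ->
     opnorm R (d k) (d k) (nrm k) (nrm k) (L k)
       < opnorm R (d k.+1) (d k.+1) (nrm k.+1) (nrm k.+1) (L k.+1)) ->
  opnorm R (d n.-1) (d n.-1) (nrm n.-1) (nrm n.-1) (L n.-1) <= 1 ->
  (* tau is a homeomorphism with inverse tauinv *)
  cancel tau tauinv -> cancel tauinv tau ->
  scontinuous R n d nrm tau -> scontinuous R n d nrm tauinv ->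
  (* Lin = tau^-1 o NonLin o tau *)
  (forall x : state R n d, Lin R n d L Cc x = tauinv (NonLin R n d L Cc N1 N (tau x))) ->
  forall y : state R n d,
    (fun t : nat =>
       normx R n d nrm
         (subs R n d
            (iter t (NonLin R n d L Cc N1 N) y)
            (iter t (fun z => tau (Nom R n d L (tauinv z)))
               (tau (pert R n d L Cc V lam (tauinv y)))))) @ \oo --> (0 : R).
Proof.
move=> n0 hd hnrm hLu hVu hLV hspec hord hlast tK tiK tc tic hconj y.
apply: cv0_cvg.
set x := tauinv y.
have hy : y = tau x by rewrite /x tiK.
have H1 t : iter t (NonLin R n d L Cc N1 N) y = tau (iter t (Lin R n d L Cc) x).
  elim: t => [|t IH] /=; first exact: hy.
  by rewrite IH hconj tiK.
have H2 t : iter t (fun z => tau (Nom R n d L (tauinv z)))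
    (tau (pert R n d L Cc V lam (tauinv y))) =
    tau (iter t (Nom R n d L) (pert R n d L Cc V lam x)).
  by elim: t => [|t IH] //=; rewrite IH tK.
pose a t := iter t (Lin R n d L Cc) x.
pose b t := iter t (Nom R n d L) (pert R n d L Cc V lam x).
have nx0 := normx_ge0 n d nrm hnrm.
apply: (cv0_le (f := fun t => normx R n d nrm (subs R n d (tau (a t)) (tau (b t))))).
  by move=> t; rewrite H1 H2.
apply: subseq_crit => phi hphi.
have [psi hpsi [q hq]] := partB n d nrm L hd hnrm hord hlast (pert R n d L Cc V lam x) phi hphi.
exists psi => //.
have hA := partA n d nrm L Cc V lam hd hnrm hLu hVu hLV hspec hord hlast x.
have hA' := cv0_sub (cv0_sub hA hphi) hpsi.
have haq : cv0 (fun k => normx R n d nrm (subs R n d (a (phi (psi k))) q)).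
  apply: (cv0_le _ (cv0_add hA' hq)) => k /=.
  rewrite !ger0_norm ?addr_ge0 //.
  exact: normx_tri.
have hc : forall s : nat -> state R n d,
    cv0 (fun k => normx R n d nrm (subs R n d (s k) q)) ->
    cv0 (fun k => normx R n d nrm (subs R n d (tau (s k)) (tau q))).
  move=> s hs e e0; have [del del0 hdel] := tc q e e0.
  have [N0 hN] := hs del del0; exists N0 => k Nk.
  rewrite ger0_norm //; apply: hdel.
  by have := hN k Nk; rewrite ger0_norm.
apply: (cv0_le _ (cv0_add (hc _ haq) (hc _ hq))) => k /=.
rewrite !ger0_norm ?addr_ge0 //.
rewrite [X in _ <= _ + X](normx_sym n d nrm hnrm).
exact: normx_tri.
Qed.
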